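(* For every $n\geq 0$, the partially ordered set $\mathcal{L}_n^*$ is a distributive lattice.
   Context: Games are finite partizan games; $o(G)$ is the misère outcome class (ordered $\mathscr{L}>\mathscr{N}>\mathscr{R}$, $\mathscr{L}>\mathscr{P}>\mathscr{R}$). A universe is a set of games closed under options, disjunctive sums, conjugates, and forming $\{\mathscr{G}^L\mid\mathscr{G}^R\}$ from nonempty finite subsets of it; $G\geq_\mathcal{U}H$ means $o(G+X)\geq o(H+X)$ for all $X\in\mathcal{U}$. A Left dead-end is a game all of whose subpositions have no Left option. For Left dead-ends, $G\geq H$ means $G\geq_\mathcal{U}H$ for every universe $\mathcal{U}$, and $G=H$ means $G\geq H$ and $H\geq G$. The birthday of a Left dead-end $G$ is the minimum height of the game tree of a Left dead-end $H$ with $H=G$. $\mathcal{L}_n$ is the set of $=$-equivalence classes of Left dead-ends of birthday $\leq n$, partially ordered by $\geq$; $\mathcal{L}_n^\times=\mathcal{L}_n\setminus\{0\}$; $\mathcal{L}_n^*=\mathcal{L}_n^\times\cup\{\triangledown\}$ where $\triangledown$ is a new element with $\triangledown\geq G$ for all $G\in\mathcal{L}_n^\times$. *)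

(* Defs.v *)
From mathcomp Require Import all_boot.
Set Implicit Arguments. Unset Strict Implicit. Unset Printing Implicit Defensive.

(* Finite partizan game forms: {Left options | Right options}. *)
Inductive game : Type := Game : seq game -> seq game -> game.

Definition leftOpts (G : game) : seq game := let: Game Ls _ := G in Ls.
Definition rightOpts (G : game) : seq game := let: Game _ Rs := G in Rs.

(* list membership (game has no eqType instance) *)
Fixpoint inl (x : game) (s : seq game) : Prop :=
  if s is y :: s' then y = x \/ inl x s' else False.

Definition zero : game := Game [::] [::].

(* Misère play: a player who cannot move on their turn wins.
   wins G = (Left wins moving first, Right wins moving first). *)
Fixpoint wins (G : game) : bool * bool :=
  let: Game Ls Rs := G in
  (nilp Ls || has (fun GL => ~~ (wins GL).2) Ls,
   nilp Rs || has (fun GR => ~~ (wins GR).1) Rs).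

Inductive outcome : Type := oL | oN | oP | oR.

Definition o (G : game) : outcome :=
  match wins G with
  | (true, false) => oL
  | (true, true) => oN
  | (false, false) => oP
  | (false, true) => oR
  end.

(* outcome_le a b  <->  a <= b  in the order  L > N > R,  L > P > R. *)
Definition outcome_le (a b : outcome) : bool :=
  match a, b with
  | oR, _ => true
  | _, oL => true
  | oN, oN => true
  | oP, oP => true
  | _, _ => false
  end.

Fixpoint gsum (G H : game) {struct G} : game :=
  let fix sumH (H : game) : game :=
    let: Game GL GR := G in
    let: Game HL HR := H in
    Game (map (fun g => gsum g H) GL ++ map sumH HL)
         (map (fun g => gsum g H) GR ++ map sumH HR)
  in sumH H.

Fixpoint conj (G : game) : game :=
  let: Game Ls Rs := G in Game (map conj Rs) (map conj Ls).

Definition universe (U : game -> Prop) : Prop :=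
  (forall G, U G -> forall G', inl G' (leftOpts G) -> U G') /\
  (forall G, U G -> forall G', inl G' (rightOpts G) -> U G') /\
  (forall G H, U G -> U H -> U (gsum G H)) /\
  (forall G, U G -> U (conj G)) /\
  (forall Ls Rs : seq game, Ls <> [::] -> Rs <> [::] ->
     (forall G, inl G Ls -> U G) -> (forall G, inl G Rs -> U G) ->
     U (Game Ls Rs)).

Definition ge_in (U : game -> Prop) (G H : game) : Prop :=
  forall X, U X -> outcome_le (o (gsum H X)) (o (gsum G X)).

Definition gge (G H : game) : Prop := forall U, universe U -> ge_in U G H.

Definition geq (G H : game) : Prop := gge G H /\ gge H G.

Fixpoint ldead (G : game) : bool :=
  let: Game Ls Rs := G in nilp Ls && all ldead Rs.

Fixpoint height (G : game) : nat :=
  let: Game Ls Rs := G in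
  foldr maxn 0 (map (fun g => (height g).+1) Ls ++ map (fun g => (height g).+1) Rs).

Definition is_birthday (G : game) (b : nat) : Prop :=
  (exists H, ldead H /\ geq H G /\ height H = b) /\
  (forall H, ldead H -> geq H G -> b <= height H).

(* Representatives of elements of L_n^x : Left dead-ends of birthday <= n,
   not equal to 0. *)
Definition Lx_rep (n : nat) (G : game) : Prop :=
  ldead G /\ (exists b, is_birthday G b /\ b <= n) /\ ~ geq G zero.

(* Carrier of L_n^* : None is the new top element (triangledown),
   Some G ranges over representatives of L_n^x. *)
Definition Lstar (n : nat) : Type := option {G : game | Lx_rep n G}.

Definition Lstar_le (n : nat) (x y : Lstar n) : Prop :=
  match x, y with
  | _, None => True
  | None, Some _ => False
  | Some a, Some b => gge (proj1_sig b) (proj1_sig a)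
  end.

(* Generic order notions for a preordered type; the poset is its quotient
   by mutual <=. *)
Definition is_lub (T : Type) (le : T -> T -> Prop) (x y z : T) : Prop :=
  le x z /\ le y z /\ forall w, le x w -> le y w -> le z w.

Definition is_glb (T : Type) (le : T -> T -> Prop) (x y z : T) : Prop :=
  le z x /\ le z y /\ forall w, le w x -> le w y -> le w z.

(* The poset (quotient of T by mutual le) is a distributive lattice:
   all binary joins and meets exist, and x /\ (y \/ z) = (x /\ y) \/ (x /\ z). *)
Definition distributive_lattice (T : Type) (le : T -> T -> Prop) : Prop :=
  (forall x y : T, exists z, is_lub le x y z) /\
  (forall x y : T, exists z, is_glb le x y z) /\
  (forall x y z j m a b c : T,
     is_lub le y z j -> is_glb le x j m ->
     is_glb le x y a -> is_glb le x z b -> is_lub le a b c ->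
     le m c /\ le c m).

(* Main.v *)
Require Import Defs.
From mathcomp Require Import all_boot.
From Stdlib Require Import Classical.
Set Implicit Arguments. Unset Strict Implicit. Unset Printing Implicit Defensive.


Definition game_ind' (P : game -> Prop)
  (IH : forall Ls Rs, (forall g, inl g Ls -> P g) -> (forall g, inl g Rs -> P g) -> P (Game Ls Rs)) :
  forall G, P G :=
  fix F (G : game) : P G :=
    match G with
    | Game Ls Rs =>
      IH Ls Rs
        ((fix f (l : seq game) : forall g, inl g l -> P g :=
           match l with
           | [::] => fun g H => False_ind _ H
           | x :: l' => fun g H => match H with
                                 | or_introl e => eq_ind x P (F x) g e
                                 | or_intror h => f l' g h end
           end) Ls)
        ((fix f (l : seq game) : forall g, inl g l -> P g :=
           match l with
           | [::] => fun g H => False_ind _ H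
           | x :: l' => fun g H => match H with
                                 | or_introl e => eq_ind x P (F x) g e
                                 | or_intror h => f l' g h end
           end) Rs)
    end.

Lemma hasI (p : pred game) s : has p s <-> exists x, inl x s /\ p x.
Proof.
elim: s => [|y s IH] /=; first by split => // [[x []]].
split.
- case/orP => [py|/IH [x [h px]]]; first by exists y; split => //; left.
  by exists x; split => //; right.
- move=> [x [[<-|h] px]]; first by rewrite px.
  by apply/orP; right; apply/IH; exists x.
Qed.

Lemma allI (p : pred game) s : all p s <-> forall x, inl x s -> p x.
Proof.
elim: s => [|y s IH] /=; first by split.
split.
- case/andP => py /IH ps x [<-|h] //; exact: ps.
- move=> H; apply/andP; split; first by apply: H; left.
  by apply/IH => x h; apply: H; right.
Qed.

Lemma inl_map (f : game -> game) x s : inl x (map f s) <-> exists y, inl y s /\ x = f y.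
Proof.
elim: s => [|y s IH] /=; first by split => // [[y []]].
split.
- case=> [<-|/IH [z [h ->]]]; first by exists y; split => //; left.
  by exists z; split => //; right.
- move=> [z [[<-|h] e]]; subst x; first by left.
  by right; apply/IH; exists z.
Qed.

Lemma inl_cat x s t : inl x (s ++ t) <-> inl x s \/ inl x t.
Proof.
elim: s => [|y s IH] /=; first by tauto.
rewrite IH; tauto.
Qed.

Lemma inl_filter (p : pred game) x s : inl x (filter p s) <-> inl x s /\ p x.
Proof.
elim: s => [|y s IH] /=; first by tauto.
case py: (p y) => /=; rewrite IH.
- split.
  + case=> [<-|[h px]]; split => //; [by left | by right].
  + by move=> [[<-|h] px]; [left|right].
- split.
  + by move=> [h px]; split => //; right.
  + move=> [[e|h] px]; last by [].
    by subst y; rewrite py in px.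
Qed.

Notation wL G := (wins G).1.
Notation wR G := (wins G).2.

Lemma winsE Ls Rs : wins (Game Ls Rs) =
  (nilp Ls || has (fun g => ~~ wR g) Ls, nilp Rs || has (fun g => ~~ wL g) Rs).
Proof. by []. Qed.

Lemma gsumE GL GR HL HR : gsum (Game GL GR) (Game HL HR) =
  Game (map (fun g => gsum g (Game HL HR)) GL ++ map (fun h => gsum (Game GL GR) h) HL)
       (map (fun g => gsum g (Game HL HR)) GR ++ map (fun h => gsum (Game GL GR) h) HR).
Proof. by []. Qed.

Lemma ldeadE Ls Rs : ldead (Game Ls Rs) = nilp Ls && all ldead Rs.
Proof. by []. Qed.

Fixpoint Cb (G H : game) {struct G} : bool :=
  let: Game _ GR := G in
  if nilp GR then nilp (rightOpts H)
  else ~~ nilp (rightOpts H) && all (fun g => has (fun h => Cb g h) (rightOpts H)) GR.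

Arguments Cb : simpl never.
Arguments gsum : simpl never.

Lemma CbE GL GR H : Cb (Game GL GR) H =
  if nilp GR then nilp (rightOpts H)
  else ~~ nilp (rightOpts H) && all (fun g => has (fun h => Cb g h) (rightOpts H)) GR.
Proof. by []. Qed.

Lemma Cb_refl G : Cb G G.
Proof.
elim/game_ind': G => Ls Rs _ IH; rewrite CbE /=.
case: ifP => // /negbT ->; apply/allI => g h; apply/hasI; exists g; split => //; exact: IH.
Qed.

Lemma Cb_trans G H K : Cb G H -> Cb H K -> Cb G K.
Proof.
elim/game_ind': G H K => GL GR _ IH [HL HR] [KL KR]; rewrite !CbE /=.
case: ifP => nG.
  by move=> ->.
case/andP=> nH /allI A; rewrite (negbTE nH) => /andP [-> /allI B] /=.
apply/allI => g hg; have /hasI [h [hh gh]] := A g hg.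
have /hasI [k [hk hk']] := B h hh.
apply/hasI; exists k; split => //; exact: IH gh hk'.
Qed.

Lemma nilp_map (f : game -> game) s : nilp (map f s) = nilp s.
Proof. by rewrite /nilp size_map. Qed.

Lemma gsum_dead GR XL XR : gsum (Game [::] GR) (Game XL XR) =
  Game (map (gsum (Game [::] GR)) XL)
       (map (fun g => gsum g (Game XL XR)) GR ++ map (gsum (Game [::] GR)) XR).
Proof. by []. Qed.

Lemma CbG GL GR HL HR : Cb (Game GL GR) (Game HL HR) =
  if nilp GR then nilp HR else ~~ nilp HR && all (fun g => has (Cb g) HR) GR.
Proof. by []. Qed.

Lemma sound G : ldead G -> forall H X, ldead H -> Cb G H ->
  (wL (gsum H X) -> wL (gsum G X)) /\ (wR (gsum G X) -> wR (gsum H X)).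
Proof.
elim/game_ind': G => GL GR _ IHG.
rewrite ldeadE => /andP [/nilP -> /allI dG] [HL HR] X.
rewrite ldeadE => /andP [/nilP -> /allI dH] cGH.
elim/game_ind': X => XL XR IHL IHR.
rewrite !gsum_dead !winsE !nilp_map !has_map.
split.
- case/orP => [->//|/hasI [x [hx px]]]; apply/orP; right; apply/hasI; exists x; split => //.
  exact: (contra (proj2 (IHL x hx)) px).
- rewrite /nilp !size_cat !size_map !addn_eq0 !has_cat !has_map.
  move: cGH; rewrite CbG.
  case: ifP => nG.
    move=> nH /orP [/andP [_ ->]|]; first by rewrite (eqP nH).
    case/orP=> /hasI [y [hy py]].
      by move: nG hy => /nilP ->.
    apply/orP; right; apply/orP; right.
    apply/hasI; exists y; split => //; exact: (contra (proj1 (IHR y hy)) py).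
  case/andP => nH /allI cA.
  have -> : (size GR == 0) = false by move: nG; rewrite /nilp.
  move=> /= /orP [] /hasI [y [hy py]]; apply/orP; right; apply/orP.
    left; have /hasI [h [hh ch]] := cA y hy.
    apply/hasI; exists h; split => //.
    exact: (contra (proj1 (IHG y hy (dG y hy) h (Game XL XR) (dH h hh) ch)) py).
  right; apply/hasI; exists y; split => //; exact: (contra (proj1 (IHR y hy)) py).
Qed.

Fixpoint Ul (A : game) : seq game :=
  let: Game _ Rs := A in
  if nilp Rs then [:: zero] else map (fun a => Game (Ul a) [:: zero]) Rs.

Definition TG A := Game (Ul A) [::].
Definition UG A := Game (Ul A) [:: zero].

Lemma UlE AL AR : Ul (Game AL AR) =
  if nilp AR then [:: zero] else map UG AR.
Proof. by []. Qed.

Lemma wL_same B L R1 R2 : ldead B ->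
  wL (gsum B (Game L R1)) = wL (gsum B (Game L R2)).
Proof. by case: B => BL BR; rewrite ldeadE => /andP [/nilP -> _]. Qed.

Lemma wL_dead_zero B : ldead B -> wL (gsum B zero).
Proof. by case: B => BL BR; rewrite ldeadE => /andP [/nilP -> _]. Qed.

Lemma wLE Ls Rs : wL (Game Ls Rs) = nilp Ls || has (fun g => ~~ wR g) Ls.
Proof. by []. Qed.
Lemma wRE Ls Rs : wR (Game Ls Rs) = nilp Rs || has (fun g => ~~ wL g) Rs.
Proof. by []. Qed.

Lemma wR_zero BR : (forall b, inl b BR -> ldead b) -> wR (gsum (Game [::] BR) zero) = nilp BR.
Proof.
move=> dB; rewrite /zero gsum_dead wRE cats0 nilp_map has_map.
have -> : has (preim (gsum^~ (Game [::] [::])) (fun g => ~~ wL g)) BR = false.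
  apply/negbTE/negP => /hasI [b [hb pb]]; move: pb => /negP; apply.
  exact: (wL_dead_zero (dB b hb)).
by rewrite orbF.
Qed.

Lemma eq_inl_all (p q : pred game) s : (forall x, inl x s -> p x = q x) -> all p s = all q s.
Proof.
elim: s => [|y s IH] //= H; rewrite H; last by left.
by rewrite IH // => x h; apply: H; right.
Qed.

Lemma eq_inl_has (p q : pred game) s : (forall x, inl x s -> p x = q x) -> has p s = has q s.
Proof.
elim: s => [|y s IH] //= H; rewrite H; last by left.
by rewrite IH // => x h; apply: H; right.
Qed.

Lemma PT A : forall B, ldead B -> wL (gsum B (TG A)) = ~~ Cb A B.
Proof.
elim/game_ind': A => AL AR _ IH [BL BR].
rewrite ldeadE => /andP [/nilP -> /allI dB].
rewrite /TG gsum_dead wLE CbG UlE.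
case: ifP => nA.
  have -> : nilp (map (gsum (Game [::] BR)) [:: zero]) = false by [].
  rewrite orFb has_map has_seq1.
  change (~~ wR (gsum (Game [::] BR) zero) = ~~ nilp BR).
  by rewrite wR_zero.
rewrite nilp_map nilp_map nA orFb has_map has_map.
have PU : forall a, inl a AR -> ~~ wR (gsum (Game [::] BR) (UG a)) = all (fun b => ~~ Cb a b) BR.
  move=> a ha; rewrite /UG gsum_dead wRE.
  have -> : nilp ([seq gsum g (Game (Ul a) [:: zero]) | g <- BR] ++
             [seq gsum (Game [::] BR) i | i <- [:: zero]]) = false.
    by rewrite /nilp size_cat /= addn1.
  rewrite orFb has_cat has_map has_map has_seq1.
  have -> : (preim (gsum (Game [::] BR)) (fun g => ~~ wL g)) zero = false.
    change (~~ wL (gsum (Game [::] BR) zero) = false).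
    by rewrite wL_dead_zero // ldeadE; apply/allI.
  rewrite orbF -all_predC; apply: eq_inl_all => b hb.
  change (~~ ~~ wL (gsum b (Game (Ul a) [:: zero])) = ~~ Cb a b).
  rewrite negbK (wL_same _ _ [::] (dB b hb)).
  exact: (IH a ha b (dB b hb)).
rewrite (eq_inl_has (q := fun a => all (fun b => ~~ Cb a b) BR)); last first.
  move=> a ha; exact: PU.
case nB: (nilp BR) => /=.
  move: nB => /nilP ->; move: nA; case: AR {IH PU} => //.
rewrite -has_predC; apply: eq_inl_has => a ha.
by rewrite /predC /= -all_predC.
Qed.

Lemma univT : universe (fun _ => True).
Proof. by do 4 (split; first by []). Qed.

Lemma ole A B : outcome_le (o A) (o B) = (wL A ==> wL B) && (wR B ==> wR A).
Proof.
rewrite /o; case: (wins A) => [[] []]; case: (wins B) => [[] []]; by [].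
Qed.

Lemma gge_Cb G H : ldead G -> ldead H -> gge G H <-> Cb G H.
Proof.
move=> dG dH; split.
- move=> h; have := h _ univT (TG G) I; rewrite ole => /andP [+ _].
  rewrite !PT // Cb_refl /= => /implyP.
  by case: (Cb G H) => // ->.
- move=> c U _ X _; rewrite ole.
  have [h1 h2] := sound dG X dH c.
  by apply/andP; split; apply/implyP.
Qed.

Lemma nilpI s : ~~ nilp s <-> exists x, inl x s.
Proof. case: s => [|y s] /=; split => //; [by case=> x [] | by exists y; left]. Qed.

Lemma heightE Ls Rs : height (Game Ls Rs) =
  foldr maxn 0 (map (fun g => (height g).+1) Ls ++ map (fun g => (height g).+1) Rs).
Proof. by []. Qed.

Lemma foldr_max_le (s : seq nat) k : (foldr maxn 0 s <= k) = all (fun x => x <= k) s.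
Proof. by elim: s => //= x s IH; rewrite geq_max IH. Qed.

Lemma height_dead Rs k : (height (Game [::] Rs) <= k) = all (fun g => height g < k) Rs.
Proof. by rewrite heightE /= foldr_max_le all_map. Qed.

Lemma has_trans g e s : Cb g e -> has (Cb e) s -> has (Cb g) s.
Proof.
move=> ge /hasI [x [hx ex]]; apply/hasI; exists x; split => //; exact: Cb_trans ge ex.
Qed.

Lemma S_mono B A g : Cb B A -> ~~ nilp (rightOpts B) ->
  has (Cb g) (rightOpts B) -> has (Cb g) (rightOpts A).
Proof.
case: B => BL BR; case: A => AL AR /=; rewrite CbG => + nB; rewrite (negbTE nB).
case/andP => _ /allI H /hasI [r [hr gr]].
exact: has_trans gr (H r hr).
Qed.

Lemma Cb_nonempty B A : Cb B A -> ~~ nilp (rightOpts B) -> ~~ nilp (rightOpts A).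
Proof.
case: B => BL BR; case: A => AL AR /=; rewrite CbG => + nB; rewrite (negbTE nB).
by case/andP.
Qed.

Lemma Cb_zero_r G : Cb G zero = nilp (rightOpts G).
Proof. by case: G => L R; rewrite /zero CbG; case: ifP. Qed.

Lemma Cb_zero_l G : Cb zero G = nilp (rightOpts G).
Proof. by case: G. Qed.

Lemma geq_Cb G H : ldead G -> ldead H -> Defs.geq G H <-> Cb G H /\ Cb H G.
Proof.
move=> dG dH; rewrite /geq; split.
- by case=> /(gge_Cb dG dH) ? /(gge_Cb dH dG) ?.
- by case=> /(gge_Cb dG dH) ? /(gge_Cb dH dG) ?.
Qed.

Definition good n H := [&& ldead H, height H <= n & ~~ nilp (rightOpts H)].

Lemma Lx_dead n G : Lx_rep n G -> ldead G.
Proof. by case. Qed.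

Lemma Lx_nz n G : Lx_rep n G -> ~~ nilp (rightOpts G).
Proof.
move=> [dG [_ nz]]; apply/negP => nG; apply: nz.
have dz : ldead zero by [].
by apply/geq_Cb => //; rewrite Cb_zero_r Cb_zero_l.
Qed.

Lemma rep_of n G : Lx_rep n G -> exists H, good n H /\ Cb H G /\ Cb G H.
Proof.
move=> L; have dG := Lx_dead L; have nG := Lx_nz L.
case: L => _ [[b [[[H [dH [eH hH]]] _] bn]] _].
have [c1 c2] := (proj1 (geq_Cb dH dG) eH).
exists H; split => //; rewrite /good dH hH bn /=.
exact: Cb_nonempty c2 nG.
Qed.

Lemma min_exists (P : nat -> Prop) k : P k -> exists b, P b /\ (forall j, P j -> b <= j) /\ b <= k.
Proof.
suff HH : forall K k', k' <= K -> P k' -> exists b, P b /\ (forall j, P j -> b <= j) /\ b <= k'.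
  by apply: HH.
elim=> [|K IH] k' hk Pk.
  exists k'; split => //; split => // j _; by move: hk; rewrite leqn0 => /eqP ->.

case: (classic (exists j, j < k' /\ P j)) => [[j [hj Pj]]|nj].
  have hjK : j <= K by rewrite -ltnS; exact: leq_trans hj hk.
  have [b [Pb [mb bj]]] := IH j hjK Pj.
  exists b; split => //; split => //; apply: leq_trans bj (ltnW hj).
exists k'; split => //; split => // j Pj; rewrite leqNgt; apply/negP => hj; apply: nj.
by exists j.
Qed.

Lemma rep_to n G H : good n H -> ldead G -> Cb H G -> Cb G H -> Lx_rep n G.
Proof.
case/and3P => dH hH nH dG c1 c2; split => //; split.
  have [b [[H' [dH' [eH' hb]]] [mb bn]]] :=
    @min_exists (fun j => exists H', ldead H' /\ Defs.geq H' G /\ height H' = j) (height H)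
      (ex_intro _ H (Logic.conj dH (Logic.conj (proj2 (geq_Cb dH dG) (Logic.conj c1 c2)) erefl))).
  exists b; split; last exact: leq_trans bn hH.
  split; first by exists H'.
  by move=> H'' d'' e''; apply: mb; exists H''.
move=> /(geq_Cb dG (isT : ldead zero)) [c _]; move: c; rewrite Cb_zero_r => nG.
by move: (Cb_nonempty c1 nH); rewrite nG.
Qed.

Fixpoint bits k : seq (seq bool) :=
  if k is k'.+1 then [seq b :: s | b <- [:: true; false], s <- bits k'] else [:: [::]].

Lemma bits_in m : m \in bits (size m).
Proof.
elim: m => [|b m IH] //=.
rewrite !mem_cat; case: b; rewrite mem_map ?IH ?orbT //; by move=> x y [].
Qed.

Fixpoint E k : seq game :=
  if k is k'.+1 then map (fun m => Game [::] (mask m (E k'))) (bits (size (E k')))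
  else [:: zero].

Lemma inl_mapT (T : eqType) (f : T -> game) x l : x \in l -> inl (f x) (map f l).
Proof.
elim: l => [|y l IH] //=; rewrite inE => /orP [/eqP ->|h]; first by left.
by right; apply: IH.
Qed.

Lemma inl_mapT_inv (T : Type) (f : T -> game) g l : inl g (map f l) -> exists x, g = f x.
Proof.
elim: l => [|y l IH] //= [<-|h]; first by exists y.
exact: IH.
Qed.

Lemma inl_mask x m s : inl x (mask m s) -> inl x s.
Proof.
elim: s m => [|y s IH] [|b m] //=.
case: b => /=; last by move=> h; right; exact: IH h.
by case=> [->|h]; [left|right; exact: IH h].
Qed.

Lemma E_ok k : forall e, inl e (E k) -> ldead e /\ height e <= k.
Proof.
elim: k => [|k IH] e /=; first by case=> [<-|].
move=> /inl_mapT_inv [m ->]; split.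
  rewrite ldeadE /=; apply/allI => x /inl_mask /IH []; done.
rewrite height_dead; apply/allI => x /inl_mask /IH [_]; done.
Qed.

Lemma Cb_sets L1 s L2 t : all (fun x => has (Cb x) t) s -> (~~ nilp t -> ~~ nilp s) ->
  Cb (Game L1 s) (Game L2 t).
Proof.
move=> A N; rewrite CbG; case: ifP => ns.
  by apply/negPn/negP => nt; move: (N nt); rewrite ns.
rewrite A andbT; move/negbT: ns => /nilpI [x hx].
have /hasI [y [hy _]] := proj1 (allI _ _) A x hx.
by apply/nilpI; exists y.
Qed.

Lemma E_cover k g : ldead g -> height g <= k -> exists e, inl e (E k) /\ Cb e g /\ Cb g e.
Proof.
elim: k g => [|k IH] [L Rs]; rewrite ldeadE => /andP [/nilP -> /allI dR]; rewrite height_dead.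
  case: Rs dR => [|r Rs] // _ _; exists zero; split; first by left.
  by split; apply: Cb_refl.
move=> /allI hR.
pose P e := has (fun r => Cb e r && Cb r e) Rs.
have cov : forall r, inl r Rs -> exists e, inl e (filter P (E k)) /\ Cb r e.
  move=> r hr; have [e [he [c1 c2]]] := IH r (dR r hr) (hR r hr).
  exists e; split => //; apply/inl_filter; split => //.
  by apply/hasI; exists r; split => //; rewrite c1 c2.
exists (Game [::] (filter P (E k))); split.
  rewrite /= filter_mask; apply: (inl_mapT (fun m => Game [::] (mask m (E k)))).
  by rewrite -(size_map P); exact: bits_in.
split.
- apply: Cb_sets.
    apply/allI => x /inl_filter [_ /hasI [r [hr /andP [c _]]]].
    by apply/hasI; exists r.
  move=> /nilpI [r hr]; have [e [he _]] := cov r hr; by apply/nilpI; exists e.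
- apply: Cb_sets.
    apply/allI => r hr; have [e [he c]] := cov r hr; by apply/hasI; exists e.
  move=> /nilpI [e /inl_filter [_ /hasI [r [hr _]]]]; by apply/nilpI; exists r.
Qed.

Section Lat.
Variable n : nat.

Definition S (x : Lstar n) (g : game) : bool :=
  match x with None => false | Some a => has (Cb g) (rightOpts (proj1_sig a)) end.

Definition D (g : game) := ldead g /\ height g < n.

Lemma good_dead_opts H : good n H -> forall r, inl r (rightOpts H) -> D r.
Proof.
case: H => L R /and3P [dH hH _] r hr; move: dH hH; rewrite ldeadE => /andP [/nilP -> /allI dR].
rewrite height_dead => /allI hR; split; [exact: dR | exact: hR].
Qed.

Lemma le_S (x y : Lstar n) : Lstar_le x y <-> (forall g, D g -> S y g -> S x g).
Proof.
case: y => [[b Lb]|]; last by case: x => [?|] /=; split => // _ g _.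
have [b' [gb [c1 c2]]] := rep_of Lb.
have nb' : ~~ nilp (rightOpts b') by case/and3P: gb.
have Sb : forall r, inl r (rightOpts b') -> has (Cb r) (rightOpts b).
  move=> r hr; apply: (S_mono c1 nb'); apply/hasI; exists r; split => //; exact: Cb_refl.
case: x => [[a La]|] /=.
- have dA := Lx_dead La; have dB := Lx_dead Lb.
  change (gge b a <-> (forall g, D g -> has (Cb g) (rightOpts b) -> has (Cb g) (rightOpts a))).
  rewrite (gge_Cb dB dA); split.
    move=> c g _; apply: S_mono c (Lx_nz Lb).
  move=> H; apply: Cb_trans c2 _.
  case: b' gb {c1 nb' Sb} (Sb) => BL BR gb Sb'.
  have nA := Lx_nz La; move: nA; case: a {La dA H} (H) => AL AR HH nA.
  apply: Cb_sets; last by move=> _; case/and3P: gb.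
  apply/allI => r hr; apply: HH; last exact: Sb'.
  exact: (good_dead_opts gb hr).
- split => // H; move/nilpI: nb' => [r hr].
  by have := H r (good_dead_opts gb hr) (Sb r hr).
Qed.


Lemma S_rep a (La : Lx_rep n a) : exists a', good n a' /\
  forall g, has (Cb g) (rightOpts a) = has (Cb g) (rightOpts a').
Proof.
have [a' [ga [c1 c2]]] := rep_of La; exists a'; split => // g.
have na : ~~ nilp (rightOpts a') by case/and3P: ga.
apply/idP/idP; [exact: S_mono c2 (Lx_nz La) | exact: S_mono c1 na].
Qed.

Lemma some_good m : good n m -> exists x : Lstar n, forall g, S x g = has (Cb g) (rightOpts m).
Proof.
move=> gm; have dm : ldead m by case/and3P: gm.
by exists (Some (exist _ m (rep_to gm dm (Cb_refl m) (Cb_refl m)))).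
Qed.

Lemma glb0 (x y : Lstar n) : exists m0 : Lstar n, forall g, D g -> S m0 g = S x g || S y g.
Proof.
case: x => [[a La]|]; last by exists y.
case: y => [[b Lb]|]; last by exists (Some (exist _ a La)) => g _ /=; rewrite orbF.
have [[AL AR] [ga Ea]] := S_rep La; have [[BL BR] [gb Eb]] := S_rep Lb.
have gm : good n (Game [::] (AR ++ BR)).
  case/and3P: ga => +++; case/and3P: gb => +++.
  rewrite !ldeadE => /andP [/nilP -> dB] hB nB /andP [/nilP -> dA] hA nA.
  rewrite /good ldeadE all_cat dA dB /= height_dead all_cat.
  move: hA hB; rewrite !height_dead => -> -> /=.
  by move: nA; rewrite /nilp size_cat; case: (size AR).
have [m Sm] := some_good gm; exists m => g _; rewrite Sm /= Ea Eb.
by rewrite has_cat.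
Qed.

Lemma lub0 (x y : Lstar n) : exists j0 : Lstar n, forall g, D g -> S j0 g = S x g && S y g.
Proof.
case: x => [[a La]|]; last by exists None.
case: y => [[b Lb]|]; last by exists None => g _ /=; rewrite andbF.
have [a' [ga Ea]] := S_rep La; have [b' [gb Eb]] := S_rep Lb.
pose P e := has (Cb e) (rightOpts a') && has (Cb e) (rightOpts b').
pose Z := filter P (E n.-1).
have cov : forall g, D g -> P g -> exists e, inl e Z /\ Cb g e.
  move=> g [dg hg] Pg.
  have hg' : height g <= n.-1.
    by rewrite -ltnS prednK //; apply: leq_ltn_trans hg.
  have [e [he [c1 c2]]] := E_cover dg hg'.
  exists e; split => //; apply/inl_filter; split => //.
  by case/andP: Pg => p1 p2; apply/andP; split; apply: has_trans c1 _.
case nZ: (nilp Z).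
  exists None => g hg /=; rewrite Ea Eb; apply/esym/negbTE/negP => Pg.
  have [e [he _]] := cov g hg Pg.
  by move: nZ => /nilP; rewrite -/Z => EZ; rewrite EZ in he.
have n0 : 0 < n.
  case/and3P: ga => _; case: (a') => AL AR; rewrite heightE foldr_max_le all_cat !all_map.
  case/andP => _ /allI H /nilpI [r hr].
  exact: leq_ltn_trans (leq0n _) (H r hr).
have gz : good n (Game [::] Z).
  rewrite /good ldeadE height_dead nZ /= andbT; apply/andP; split.
    by apply/allI => e /inl_filter [/E_ok [] ].
  apply/allI => e /inl_filter [/E_ok [_ he] _].
  by rewrite -(prednK n0) ltnS.
have [m Sm] := some_good gz; exists m => g hg; rewrite Sm /= Ea Eb.
apply/idP/idP.
  move=> /hasI [e [/inl_filter [_ /andP [p1 p2]] ge]].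
  by apply/andP; split; apply: has_trans ge _.
move=> Pg; have [e [he ge]] := cov g hg Pg.
by apply/hasI; exists e.
Qed.

Lemma lub_char (x y j : Lstar n) :
  is_lub (@Lstar_le n) x y j <-> forall g, D g -> S j g = S x g && S y g.
Proof.
split.
- move=> [lx [ly lj]] g hg; have [j0 Sj0] := lub0 x y.
  have l0 : Lstar_le j j0.
    apply: lj; apply/le_S => h hh; rewrite Sj0 // => /andP [] //.
  apply/idP/idP.
    by move=> Sg; rewrite (proj1 (le_S _ _) lx g hg Sg) (proj1 (le_S _ _) ly g hg Sg).
  by move=> Sxy; apply: (proj1 (le_S _ _) l0 g hg); rewrite Sj0.
- move=> H; split; [|split].
  + by apply/le_S => g hg; rewrite H // => /andP [].
  + by apply/le_S => g hg; rewrite H // => /andP [].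
  + move=> w lx ly; apply/le_S => g hg Sw; rewrite H //.
    by rewrite (proj1 (le_S _ _) lx g hg Sw) (proj1 (le_S _ _) ly g hg Sw).
Qed.

Lemma glb_char (x y m : Lstar n) :
  is_glb (@Lstar_le n) x y m <-> forall g, D g -> S m g = S x g || S y g.
Proof.
split.
- move=> [lx [ly lm]] g hg; have [m0 Sm0] := glb0 x y.
  have l0 : Lstar_le m0 m.
    apply: lm; apply/le_S => h hh Sh; rewrite Sm0 // Sh ?orbT //.
  apply/idP/idP.
    by move=> Sg; rewrite -Sm0 //; apply: (proj1 (le_S _ _) l0 g hg).
  by case/orP => Sg; [apply: (proj1 (le_S _ _) lx g hg) | apply: (proj1 (le_S _ _) ly g hg)].
- move=> H; split; [|split].
  + by apply/le_S => g hg Sg; rewrite H // Sg.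
  + by apply/le_S => g hg Sg; rewrite H // Sg orbT.
  + move=> w lx ly; apply/le_S => g hg; rewrite H // => /orP [] Sg.
      exact: (proj1 (le_S _ _) lx g hg).
    exact: (proj1 (le_S _ _) ly g hg).
Qed.

End Lat.

Theorem mainTheorem9 : forall n : nat, distributive_lattice (@Lstar_le n).
Proof.
move=> n; split; [|split].
- move=> x y; have [j Sj] := lub0 x y; exists j; exact/lub_char.
- move=> x y; have [m Sm] := glb0 x y; exists m; exact/glb_char.
- move=> x y z j m a b c /lub_char Hj /glb_char Hm /glb_char Ha /glb_char Hb /lub_char Hc.
  have E g : D n g -> S m g = S c g.
    move=> hg; rewrite Hm // Hj // Hc // Ha // Hb //.
    by case: (S x g); case: (S y g); case: (S z g).
  split; apply/le_S => g hg; rewrite E //.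
Qed.
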